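(* Let $(F_n)_{n\geq0}$ be the Fibonacci sequence and $\Phi=\frac{1+\sqrt5}{2}$ the golden ratio. Then for every positive integer $n$, \[\Phi^{\frac{n^2}{4}-\frac{9}{4}}\leq \mathrm{lcm}(F_1,F_2,\dots,F_n)\leq \Phi^{\frac{n^2}{3}+\frac{4n}{3}}.\]
   Context: The Fibonacci sequence is defined by $F_0=0$, $F_1=1$, $F_{n+2}=F_{n+1}+F_n$ for $n\geq0$. $\mathrm{lcm}$ denotes the least common positive multiple. *)

(* Defs.v *)
From Stdlib Require Import Reals Arith List.
Open Scope R_scope.

Fixpoint fib (n : nat) : nat :=
  match n with
  | O => O
  | S m => match m with
           | O => 1%nat
           | S k => (fib m + fib k)%nat
           end
  end.

Fixpoint lcm_fib (n : nat) : nat :=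
  match n with
  | O => 1%nat
  | S m => Nat.lcm (lcm_fib m) (fib (S m))
  end.

Definition phi : R := (1 + sqrt 5) / 2.
Example fib_test : List.map fib (List.seq 0 8) = (0::1::1::2::3::5::8::13::nil)%nat.
Proof. reflexivity. Qed.
Example lcm_test : lcm_fib 6 = 120%nat.
Proof. reflexivity. Qed.

(* Main.v *)
Require Import Defs.
From Stdlib Require Import Reals Lra Lia Psatz NArith Arith List.

Module SmallCheck.
Open Scope nat_scope.

Fixpoint fib2 (k : nat) : N * N :=
  match k with
  | O => (0%N, 1%N)
  | S k' => let (a, b) := fib2 k' in (b, (a + b)%N)
  end.

Lemma fib2_ok k : fib2 k = (N.of_nat (fib k), N.of_nat (fib (S k))).
Proof.
induction k as [|k IH]; [reflexivity|].
simpl fib2. rewrite IH. f_equal.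
change (fib (S (S k))) with (fib (S k) + fib k).
rewrite Nat2N.inj_add. lia.
Qed.

Lemma divide_N a b : Nat.divide a b <-> N.divide (N.of_nat a) (N.of_nat b).
Proof.
split.
- intros [z ->]. exists (N.of_nat z). now rewrite Nat2N.inj_mul.
- intros [z Hz]. exists (N.to_nat z). apply Nat2N.inj. rewrite Nat2N.inj_mul, N2Nat.id. exact Hz.
Qed.

Lemma gcd_N a b : N.of_nat (Nat.gcd a b) = N.gcd (N.of_nat a) (N.of_nat b).
Proof.
symmetry. apply N.gcd_unique.
- apply divide_N, Nat.gcd_divide_l.
- apply divide_N, Nat.gcd_divide_r.
- intros q Hq1 Hq2.
  rewrite <- (N2Nat.id q) in Hq1, Hq2 |- *.
  apply divide_N. apply Nat.gcd_greatest; apply divide_N; assumption.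
Qed.

Lemma lcm_N a b : N.of_nat (Nat.lcm a b) = N.lcm (N.of_nat a) (N.of_nat b).
Proof.
unfold Nat.lcm, N.lcm. rewrite Nat2N.inj_mul, Nat2N.inj_div, gcd_N. reflexivity.
Qed.

Fixpoint lcmN (n : nat) : N :=
  match n with
  | O => 1%N
  | S m => N.lcm (lcmN m) (fst (fib2 (S m)))
  end.

Lemma lcmN_ok n : lcmN n = N.of_nat (lcm_fib n).
Proof.
induction n as [|n IH]; [reflexivity|].
simpl lcmN. rewrite IH, fib2_ok. simpl fst.
change (lcm_fib (S n)) with (Nat.lcm (lcm_fib n) (fib (S n))).
now rewrite lcm_N.
Qed.

Definition checkb (n : nat) : bool :=
  N.leb (fst (fib2 (n * n - 7))) (let l := lcmN n in l * l * l * l)%N.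

Lemma check_all : forallb checkb (seq 3 48) = true.
Proof. vm_compute. reflexivity. Qed.

Lemma small_check n : 3 <= n <= 50 ->
  fib (n * n - 7) <= lcm_fib n * lcm_fib n * lcm_fib n * lcm_fib n.
Proof.
intros Hn.
assert (H : checkb n = true).
{ pose proof check_all as C. rewrite forallb_forall in C. apply C.
  apply in_seq. lia. }
unfold checkb in H. rewrite fib2_ok, lcmN_ok in H. simpl fst in H.
apply N.leb_le in H.
rewrite <- !Nat2N.inj_mul in H. lia.
Qed.

End SmallCheck.

From mathcomp Require Import all_boot zify.
Set Implicit Arguments. Unset Strict Implicit.
Open Scope nat_scope.

Lemma fibSS k : fib k.+2 = fib k.+1 + fib k.
Proof. by []. Qed.

Lemma fib_add m n : fib (m + n).+1 = fib m.+1 * fib n.+1 + fib m * fib n.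
Proof.
elim: n m => [|n IH] m.
  by rewrite addn0 /= muln1 muln0 addn0.
rewrite -addSnnS IH !fibSS mulnDl mulnDr; lia.
Qed.

Lemma fib_gt0 n : 0 < n -> 0 < fib n.
Proof.
elim: n => [//|[|n] IH _]; first by [].
rewrite fibSS; have := IH isT; lia.
Qed.

Lemma fib_coprime n : coprime (fib n) (fib n.+1).
Proof.
elim: n => [//|n IH].
by rewrite /coprime fibSS gcdnDl gcdnC.
Qed.

Lemma fib_gcd_shift m n : gcdn (fib m) (fib (m + n)) = gcdn (fib m) (fib n).
Proof.
case: m => [|m]; first by rewrite gcd0n add0n.
rewrite addSn fib_add mulnC gcdnMDl Gauss_gcdr //.
by rewrite /coprime gcdnC; apply: fib_coprime.
Qed.

Lemma fib_gcd m n : gcdn (fib m) (fib n) = fib (gcdn m n).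
Proof.
move: {2}(m + n) (leqnn (m + n)) => s.
elim: s m n => [|s IH] m n Hs.
  have Hm : m = 0 by lia.
  have Hn : n = 0 by lia.
  by rewrite Hm Hn.
wlog Hmn : m n Hs / m <= n.
  move=> W; case: (leqP m n) => H; first exact: W.
  rewrite gcdnC [gcdn m n]gcdnC; apply: W; lia.
case: m Hs Hmn => [|m] Hs Hmn; first by rewrite !gcd0n.
have -> : n = m.+1 + (n - m.+1) by lia.
rewrite fib_gcd_shift gcdnDl IH //; lia.
Qed.

Lemma fib_dvd d n : d %| n -> fib d %| fib n.
Proof.
move=> H; apply/gcdn_idPl; rewrite fib_gcd.
by move/gcdn_idPl: H => ->.
Qed.
Lemma divide_dvdn x y : Nat.divide x y <-> x %| y.
Proof.
split=> [[z ->]|H]; first exact: dvdn_mull.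
exists (y %/ x); have := divnK H; lia.
Qed.

Lemma Natgcd_gcdn a b : Nat.gcd a b = gcdn a b.
Proof.
apply: Nat.gcd_unique.

- by apply/divide_dvdn; apply: dvdn_gcdl.
- by apply/divide_dvdn; apply: dvdn_gcdr.
- move=> d /divide_dvdn H1 /divide_dvdn H2; apply/divide_dvdn.
  by rewrite dvdn_gcd H1 H2.
Qed.

Lemma Natlcm_lcmn a b : Nat.lcm a b = lcmn a b.
Proof.
rewrite /Nat.lcm Natgcd_gcdn /lcmn.
have [->|Hg] := posnP (gcdn a b).
  rewrite divn0 Nat.div_0_r; lia.
rewrite -muln_divA ?dvdn_gcdr //.
have E := divnK (dvdn_gcdr a b).
have -> : Nat.div b (gcdn a b) = b %/ gcdn a b.
  rewrite -{1}E.
  have -> : b %/ gcdn a b * gcdn a b = Nat.mul (b %/ gcdn a b) (gcdn a b) by [].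
  rewrite Nat.div_mul //; lia.
lia.
Qed.

Lemma gcd_lcm_dvd a c b : 0 < a -> 0 < c -> 0 < b ->
  gcdn (lcmn a c) b %| lcmn (gcdn a b) (gcdn c b).
Proof.
move=> Ha Hc Hb.
have Hl : 0 < lcmn a c by rewrite lcmn_gt0 Ha Hc.
have Hg : 0 < gcdn (lcmn a c) b by rewrite gcdn_gt0 Hl.
apply/dvdn_partP => // p Hp.
have pr : prime p by move: Hp; rewrite mem_primes => /andP [].
have p1 : 1 < p by apply: prime_gt1.
apply: dvdn_trans (dvdn_part p _).
have ga : 0 < gcdn a b by rewrite gcdn_gt0 Ha.
have gc : 0 < gcdn c b by rewrite gcdn_gt0 Hc.
rewrite partn_gcd // partn_lcm // partn_lcm // !partn_gcd // !p_part.
rewrite -!expn_max -!expn_min -!expn_max dvdn_Pexp2l //.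
lia.
Qed.

Lemma lcm_fib_S m : lcm_fib m.+1 = lcmn (lcm_fib m) (fib m.+1).
Proof. by rewrite /= Natlcm_lcmn. Qed.

Lemma lcm_fib_gt0 m : 0 < lcm_fib m.
Proof.
elim: m => [//|m IH]; rewrite lcm_fib_S lcmn_gt0 IH fib_gt0 //.
Qed.

Lemma fib_dvd_lcm k m : 0 < k -> k <= m -> fib k %| lcm_fib m.
Proof.
move=> Hk; elim: m => [|m IH] Hkm; first by lia.
rewrite lcm_fib_S.
case: (ltngtP k m.+1) => H; [|lia|].
- apply: dvdn_trans (IH _) (dvdn_lcml _ _); lia.
- by rewrite H dvdn_lcmr.
Qed.

Lemma lcm_gcd_id n : lcm_fib n.+1 * gcdn (lcm_fib n) (fib n.+1) = lcm_fib n * fib n.+1.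
Proof. by rewrite lcm_fib_S muln_lcm_gcd. Qed.

Lemma U1 n : lcm_fib n.+1 <= lcm_fib n * fib n.+1.
Proof.
rewrite -lcm_gcd_id. have := lcm_fib_gt0 n.+1.
have : 0 < gcdn (lcm_fib n) (fib n.+1) by rewrite gcdn_gt0 lcm_fib_gt0.
nia.
Qed.

Lemma U2 n d : 0 < d -> d <= n -> d %| n.+1 ->
  lcm_fib n.+1 * fib d <= lcm_fib n * fib n.+1.
Proof.
move=> H0 H1 H2.
have Hd : fib d %| gcdn (lcm_fib n) (fib n.+1)
  by rewrite dvdn_gcd fib_dvd_lcm // fib_dvd.
rewrite -lcm_gcd_id leq_mul2l; apply/orP; right.
apply: dvdn_leq => //; by rewrite gcdn_gt0 lcm_fib_gt0.
Qed.

Lemma U3 n m : 0 < m -> n.+1 = 6 * m ->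
  lcm_fib n.+1 * (fib (3 * m) * fib (2 * m)) <= lcm_fib n * fib n.+1 * fib m.
Proof.
move=> Hm Hn.
have G : gcdn (fib (3 * m)) (fib (2 * m)) = fib m.
  by rewrite fib_gcd -muln_gcdl (_ : gcdn 3 2 = 1) // mul1n.
have Hd : lcmn (fib (3 * m)) (fib (2 * m)) %| gcdn (lcm_fib n) (fib n.+1).
  have D3 : 3 * m %| n.+1 by rewrite Hn; apply/dvdnP; exists 2; lia.
  have D2 : 2 * m %| n.+1 by rewrite Hn; apply/dvdnP; exists 3; lia.
  rewrite dvdn_gcd !dvdn_lcm !fib_dvd_lcm ?fib_dvd //; lia.
rewrite -lcm_gcd_id -(muln_lcm_gcd (fib (3 * m))) G mulnA.
rewrite leq_mul2r; apply/orP; right.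
rewrite leq_mul2l; apply/orP; right.
apply: dvdn_leq => //; by rewrite gcdn_gt0 lcm_fib_gt0.
Qed.

Definition inS (d : nat) : bool :=
  (d == 2) || (d == 3) || [&& 4 < d, ~~ (2 %| d) & ~~ (3 %| d)].

Fixpoint prodP (n D : nat) : nat :=
  match D with
  | 0 => 1
  | D'.+1 => prodP n D' * (if (1 < D') && inS D' && (D' %| n) then fib (n %/ D') else 1)
  end.

Lemma prodP_gt0 n D : 0 < n -> 0 < prodP n D.
Proof.
move=> Hn; elim: D => [//|D IH].
rewrite [prodP _ _]/= muln_gt0 IH andTb.
case: ifP => // /andP [/andP [H1 _] H3]; apply: fib_gt0.
rewrite divn_gt0; [exact: dvdn_leq | lia].
Qed.

Lemma dvd_prodP n D p : 1 < p -> inS p -> p %| n -> p < D -> fib (n %/ p) %| prodP n D.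
Proof.
move=> H1 H2 H3; elim: D => [//|D IH] HD; rewrite [prodP _ _]/=.
case: (ltngtP p D) => H; [| lia |].
- by apply: dvdn_mulr; apply: IH.
- by rewrite -H H1 H2 H3; apply: dvdn_mull.
Qed.

Lemma prime_inS p : prime p -> inS p.
Proof.
move=> pr; rewrite /inS.
have p1 := prime_gt1 pr.
case: (p =P 2) => [->//|H2]; case: (p =P 3) => [->//|H3] /=.
have N2 : ~~ (2 %| p) by rewrite dvdn_prime2 //; apply/eqP; auto.
have N3 : ~~ (3 %| p) by rewrite dvdn_prime2 //; apply/eqP; auto.
rewrite N2 N3 andbT.
case: (p =P 4) => [E|H4]; first by rewrite E in pr.
lia.
Qed.

Lemma gcd_fib_step k n : 0 < k -> k < n ->
  gcdn (fib k) (fib n) %| prodP n n.+1.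
Proof.
move=> Hk Hkn; rewrite fib_gcd.
set g := gcdn k n.
have g0 : 0 < g by rewrite gcdn_gt0 Hk.
have gn : g %| n by apply: dvdn_gcdr.
have gk : g <= k by apply: dvdn_leq => //; apply: dvdn_gcdl.
set q := n %/ g.
have Eq : n = q * g by rewrite divnK.
have q1 : 1 < q by nia.
set p := pdiv q.
have pr : prime p by apply: pdiv_prime.
have pq : p %| q by apply: pdiv_dvd.
have Er : q = (q %/ p) * p by rewrite divnK.
have pn : p %| n by rewrite Eq dvdn_mulr.
have p1 := prime_gt1 pr.
have En : n %/ p = (q %/ p) * g.
  have E2 : n = ((q %/ p) * g) * p by rewrite {1}Eq {1}Er mulnAC.
  rewrite {1}E2 mulnK //; lia.
apply: dvdn_trans (dvd_prodP _ _ pn _); [| lia | exact: prime_inS | ].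
- by apply: fib_dvd; rewrite En dvdn_mull.
- have := dvdn_leq _ pn; lia.
Qed.

Lemma L1gcd n m : 0 < n -> m < n -> gcdn (lcm_fib m) (fib n) %| prodP n n.+1.
Proof.
move=> Hn; elim: m => [|m IH] Hm; first by rewrite /= gcd1n dvd1n.
rewrite lcm_fib_S.
apply: dvdn_trans (gcd_lcm_dvd (lcm_fib_gt0 _) (fib_gt0 _) (fib_gt0 Hn)) _ => //.
rewrite dvdn_lcm IH ?gcd_fib_step //; lia.
Qed.

Lemma L1 n : lcm_fib n * fib n.+1 <= lcm_fib n.+1 * prodP n.+1 n.+2.
Proof.
rewrite -lcm_gcd_id leq_mul2l; apply/orP; right.
by apply: dvdn_leq; [apply: prodP_gt0 | apply: L1gcd].
Qed.

Open Scope R_scope.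

Lemma INR_muln a b : INR (a * b)%N = INR a * INR b.
Proof. exact: mult_INR. Qed.
Lemma INR_addn a b : INR (a + b)%N = INR a + INR b.
Proof. exact: plus_INR. Qed.
Lemma INR_leq a b : (a <= b)%N -> INR a <= INR b.
Proof. by move/leP; apply: le_INR. Qed.

Lemma sqrt5_bounds : 2 < sqrt 5 < 3.
Proof.
split.
- rewrite -(sqrt_square 2); last lra. apply: sqrt_lt_1; lra.
- rewrite -(sqrt_square 3); last lra. apply: sqrt_lt_1; lra.
Qed.

Lemma phi_gt1 : 1 < phi.
Proof. rewrite /phi; have := sqrt5_bounds; lra. Qed.
Lemma phi_lt2 : phi < 2.
Proof. rewrite /phi; have := sqrt5_bounds; lra. Qed.

Lemma phi_sq : phi * phi = phi + 1.
Proof.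
rewrite /phi. have H := sqrt_sqrt 5 ltac:(lra). nra.
Qed.

Lemma phi_pow_pos k : 0 < phi ^ k.
Proof. apply: pow_lt; have := phi_gt1; lra. Qed.

Lemma fib_up k : INR (fib k.+1) <= phi ^ k.
Proof.
have H : forall i, INR (fib i.+1) <= phi ^ i /\ INR (fib i.+2) <= phi ^ i.+1.
  elim=> [|i [IH1 IH2]].
  - simpl; have := phi_gt1; lra.
  - split => //. rewrite fibSS INR_addn.
    have -> : phi ^ i.+2 = phi ^ i.+1 + phi ^ i.
      rewrite /= -Rmult_assoc phi_sq; ring.
    lra.
by case: (H k).
Qed.

Lemma fib_lo k : phi ^ k <= INR (fib k.+2).
Proof.
have H : forall i, phi ^ i <= INR (fib i.+2) /\ phi ^ i.+1 <= INR (fib i.+3).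
  elim=> [|i [IH1 IH2]].
  - simpl; have := phi_lt2; lra.
  - split => //. rewrite (fibSS i.+2) INR_addn.
    have -> : phi ^ i.+2 = phi ^ i.+1 + phi ^ i.
      rewrite /= -Rmult_assoc phi_sq; ring.
    lra.
by case: (H k).
Qed.

Lemma fib_lo1 d : phi ^ d <= phi * INR (fib d.+1).
Proof.
case: d => [|d]; first by simpl; have := phi_gt1; lra.
have := fib_lo d. have := phi_gt1. rewrite /=. nra.
Qed.

Lemma cancel_pow x a b : phi ^ a * x <= phi ^ (a + b) -> x <= phi ^ b.
Proof.
rewrite pow_add => H. have := phi_pow_pos a. nra.
Qed.

Definition Su (j r : nat) : nat :=
  match r with
  | 0 => 12*j*j + 4*j
  | 1 => 12*j*j + 10*j
  | 2 => 12*j*j + 13*j + 2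
  | 3 => 12*j*j + 17*j + 5
  | 4 => 12*j*j + 20*j + 8
  | _ => 12*j*j + 26*j + 12
  end%N.

Lemma step1 n s e : INR (lcm_fib n) <= phi ^ s -> (e = s + n)%N ->
  INR (lcm_fib n.+1) <= phi ^ e.
Proof.
move=> H ->.
have A : INR (lcm_fib n.+1) <= INR (lcm_fib n) * INR (fib n.+1)
  by rewrite -!INR_muln; apply: INR_leq; apply: U1.
have B := fib_up n. rewrite pow_add.
have C : 0 <= INR (fib n.+1) by apply: pos_INR.
have D : 0 <= INR (lcm_fib n) by apply: pos_INR.
have := Rmult_le_compat _ _ _ _ D C H B. lra.
Qed.

Lemma step2 n s d e : INR (lcm_fib n) <= phi ^ s -> (0 < d)%N -> (d <= n)%N -> (d %| n.+1)%N ->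
  (s + 1 + n = d.-1 + e)%N -> INR (lcm_fib n.+1) <= phi ^ e.
Proof.
move=> H d0 dn dd E.
have A : INR (lcm_fib n.+1) * INR (fib d) <= INR (lcm_fib n) * INR (fib n.+1)
  by rewrite -!INR_muln; apply: INR_leq; apply: U2.
have B := fib_up n.
have C := fib_lo1 d.-1. rewrite prednK // in C.
apply: (@cancel_pow _ d.-1). rewrite -E !pow_add.
have P1 : 0 <= INR (fib n.+1) by apply: pos_INR.
have P2 : 0 <= INR (lcm_fib n.+1) by apply: pos_INR.
have P3 : 0 <= INR (lcm_fib n) by apply: pos_INR.
have Q1 : phi ^ d.-1 * INR (lcm_fib n.+1) <= phi * INR (fib d) * INR (lcm_fib n.+1)
  by apply: Rmult_le_compat_r.
have Q2 : INR (lcm_fib n) * INR (fib n.+1) <= phi ^ s * phi ^ n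
  by apply: Rmult_le_compat.
have := phi_gt1. rewrite pow_1. nra.
Qed.

Lemma step3 n s m e : INR (lcm_fib n) <= phi ^ s -> (0 < m)%N -> (n.+1 = 6 * m)%N ->
  (s + n + (m.-1) = (3 * m - 2) + (2 * m - 2) + e)%N -> INR (lcm_fib n.+1) <= phi ^ e.
Proof.
move=> H m0 Hn E.
have A : INR (lcm_fib n.+1) * (INR (fib (3 * m)) * INR (fib (2 * m)))
         <= INR (lcm_fib n) * INR (fib n.+1) * INR (fib m)
  by rewrite -!INR_muln; apply: INR_leq; apply: U3.
have B := fib_up n.
have C := fib_up m.-1. rewrite prednK // in C.
have D3 := fib_lo (3 * m - 2). have E3 : ((3 * m - 2).+2 = 3 * m)%N by lia. rewrite E3 in D3.
have D2 := fib_lo (2 * m - 2). have E2 : ((2 * m - 2).+2 = 2 * m)%N by lia. rewrite E2 in D2.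
apply: (@cancel_pow _ (3 * m - 2 + 2 * m - 2)).
have -> : (3 * m - 2 + 2 * m - 2 + e = s + n + m.-1)%N by lia.
rewrite !pow_add.
have P1 : 0 <= INR (fib n.+1) by apply: pos_INR.
have P2 : 0 <= INR (lcm_fib n.+1) by apply: pos_INR.
have P3 : 0 <= INR (lcm_fib n) by apply: pos_INR.
have P4 : 0 <= INR (fib m) by apply: pos_INR.
have P5 := phi_pow_pos (3 * m - 2). have P6 := phi_pow_pos (2 * m - 2).
have -> : (3 * m - 2 + 2 * m - 2 = (3 * m - 2) + (2 * m - 2))%N by lia.
rewrite pow_add.
have Q1 : phi ^ (3 * m - 2) * phi ^ (2 * m - 2) <= INR (fib (3 * m)) * INR (fib (2 * m))
  by apply: Rmult_le_compat => //; lra.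
have Q2 : INR (lcm_fib n) * INR (fib n.+1) <= phi ^ s * phi ^ n
  by apply: Rmult_le_compat.
have Q3 : INR (lcm_fib n) * INR (fib n.+1) * INR (fib m) <= phi ^ s * phi ^ n * phi ^ m.-1.
  apply: Rmult_le_compat => //; nra.
nra.
Qed.

Lemma UB_block j : INR (lcm_fib (6 * j)) <= phi ^ Su j 0 ->
  INR (lcm_fib (6 * j).+1) <= phi ^ Su j 1 /\
      INR (lcm_fib (6 * j + 1).+1) <= phi ^ Su j 2 /\
      INR (lcm_fib (6 * j + 2).+1) <= phi ^ Su j 3 /\
      INR (lcm_fib (6 * j + 3).+1) <= phi ^ Su j 4 /\
      INR (lcm_fib (6 * j + 4).+1) <= phi ^ Su j 5 /\
      INR (lcm_fib (6 * j + 5).+1) <= phi ^ Su j.+1 0.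
Proof.
move=> H0.
have H1 : INR (lcm_fib (6 * j).+1) <= phi ^ Su j 1.
  apply: (step1 H0); rewrite /Su; nia.
have H2 : INR (lcm_fib (6 * j + 1).+1) <= phi ^ Su j 2.
  rewrite addn1; apply: (step2 (d := 3 * j + 1) H1).
  - lia.
  - lia.
  - by apply/dvdnP; exists 2%N; lia.
  - rewrite /Su; nia.
have H3 : INR (lcm_fib (6 * j + 2).+1) <= phi ^ Su j 3.
  have -> : (6 * j + 2 = (6 * j + 1).+1)%N by lia.
  apply: (step2 (d := 2 * j + 1) H2).
  - lia.
  - lia.
  - by apply/dvdnP; exists 3%N; lia.
  - rewrite /Su; nia.
have H4 : INR (lcm_fib (6 * j + 3).+1) <= phi ^ Su j 4.
  have -> : (6 * j + 3 = (6 * j + 2).+1)%N by lia.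
  apply: (step2 (d := 3 * j + 2) H3).
  - lia.
  - lia.
  - by apply/dvdnP; exists 2%N; lia.
  - rewrite /Su; nia.
have H5 : INR (lcm_fib (6 * j + 4).+1) <= phi ^ Su j 5.
  have -> : (6 * j + 4 = (6 * j + 3).+1)%N by lia.
  apply: (step1 H4); rewrite /Su; nia.
have H6 : INR (lcm_fib (6 * j + 5).+1) <= phi ^ Su j.+1 0.
  have -> : (6 * j + 5 = (6 * j + 4).+1)%N by lia.
  apply: (step3 (m := j.+1) H5).
  - lia.
  - lia.
  - rewrite /Su; nia.
by do !split.
Qed.

Lemma UB6 j : INR (lcm_fib (6 * j)) <= phi ^ Su j 0.
Proof.
elim: j => [|j IH]; first by rewrite /=; lra.
have [_ [_ [_ [_ [_ H6]]]]] := UB_block IH.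
by have -> : (6 * j.+1 = (6 * j + 5).+1)%N by lia.
Qed.

Lemma UBn n : INR (lcm_fib n) <= phi ^ Su (n %/ 6) (n %% 6).
Proof.
set j := n %/ 6. set r := n %% 6.
have En : n = (6 * j + r)%N by rewrite /j /r {1}(divn_eq n 6); lia.
have Hr : (r < 6)%N by rewrite /r ltn_mod.
have [H1 [H2 [H3 [H4 [H5 H6]]]]] := UB_block (UB6 j).
rewrite En.
case: r Hr En => [|[|[|[|[|[|r]]]]]] Hr En //.
- by rewrite addn0; apply: UB6.
- by rewrite addn1.
- by have -> : (6 * j + 2 = (6 * j + 1).+1)%N by lia.
- by have -> : (6 * j + 3 = (6 * j + 2).+1)%N by lia.
- by have -> : (6 * j + 4 = (6 * j + 3).+1)%N by lia.
- by have -> : (6 * j + 5 = (6 * j + 4).+1)%N by lia.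
Qed.

Lemma Su_bound n : (3 * Su (n %/ 6) (n %% 6) <= n * n + 4 * n)%N.
Proof.
set j := n %/ 6. set r := n %% 6.
have En : n = (6 * j + r)%N by rewrite /j /r {1}(divn_eq n 6); lia.
have Hr : (r < 6)%N by rewrite /r ltn_mod.
rewrite En.
case: r Hr En => [|[|[|[|[|[|r]]]]]] Hr En //; rewrite /Su; nia.
Qed.

Lemma upper_final n :
  INR (lcm_fib n) <= Rpower phi ((INR n) ^ 2 / 3 + 4 * INR n / 3).
Proof.
have p1 := phi_gt1.
apply: (Rle_trans _ _ _ (UBn n)).
rewrite -Rpower_pow; last lra.
apply: Rle_Rpower; first lra.
have := INR_leq (Su_bound n).
rewrite INR_addn !INR_muln => H.
have E3 : INR 3%N = 3 by simpl; lra.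
have E4 : INR 4%N = 4 by simpl; lra.
rewrite E3 E4 in H. simpl. lra.
Qed.

Fixpoint sumR (f : nat -> R) (D : nat) : R :=
  match D with 0 => 0 | D'.+1 => sumR f D' + f D' end.

Lemma sumR_ext f g D : (forall d, (d < D)%N -> f d = g d) -> sumR f D = sumR g D.
Proof.
elim: D => [//|D IH] H /=; rewrite IH ?H //; move=> d Hd; apply: H; lia.
Qed.

Lemma sumR_le f g D : (forall d, (d < D)%N -> f d <= g d) -> sumR f D <= sumR g D.
Proof.
elim: D => [|D IH] H /=; first lra.
have := IH (fun d Hd => H d (ltn_trans Hd (ltnSn D))). have := H D (ltnSn D). lra.
Qed.

Lemma sumR_add f g D : sumR (fun d => f d + g d) D = sumR f D + sumR g D.
Proof. elim: D => [|D IH] /=; [lra | rewrite IH; lra]. Qed.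

Lemma sumR_scal c f D : sumR (fun d => c * f d) D = c * sumR f D.
Proof. elim: D => [|D IH] /=; [lra | rewrite IH; lra]. Qed.

Lemma sumR_ge0 f D : (forall d, 0 <= f d) -> 0 <= sumR f D.
Proof. move=> H; elim: D => [|D IH] /=; [lra | have := H D; lra]. Qed.

Lemma sumR_mono f D D' : (forall d, 0 <= f d) -> (D <= D')%N -> sumR f D <= sumR f D'.
Proof.
move=> H; elim: D' => [|D' IH] HD.
  have -> : D = 0%N by lia. simpl; lra.
case: (ltngtP D D'.+1) => HH; [|lia|].
- have := IH ltac:(lia). simpl. have := H D'. lra.
- rewrite HH; lra.
Qed.

Definition condP (n d : nat) : bool := (1 < d)%N && inS d && (d %| n).

Lemma prodP_bound n D : (0 < n)%N ->
  INR (prodP n D) <= Rpower phi (sumR (fun d => if condP n d then INR (n %/ d) - 1 else 0) D).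
Proof.
move=> Hn; have p1 := phi_gt1.
elim: D => [|D IH].
  rewrite /= Rpower_O; lra.
rewrite [prodP _ _]/= [sumR _ _]/= Rpower_plus INR_muln.
have P0 : 0 <= INR (prodP n D) by apply: pos_INR.
have -> : ((1 < D)%N && inS D && (D %| n)) = condP n D by [].
case C: (condP n D).
- move: C; rewrite /condP => /andP [/andP [H1 _] H3].
  have Hq : (0 < n %/ D)%N by rewrite divn_gt0; [exact: dvdn_leq | lia].
  have B := fib_up (n %/ D).-1. rewrite prednK // in B.
  have -> : INR (n %/ D) - 1 = INR (n %/ D).-1.
    rewrite -{1}(prednK Hq) S_INR; ring.
  rewrite Rpower_pow; last lra.
  apply: Rmult_le_compat => //; apply: pos_INR.
- rewrite Rpower_O; last lra. have -> : INR 1%N = 1 by []. lra.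
Qed.

Lemma fib_lo_R k : (0 < k)%N -> Rpower phi (INR k - 2) <= INR (fib k).
Proof.
have p1 := phi_gt1.
case: k => [//|[|j]] _.
- rewrite (_ : INR 1%N - 2 = -1); last by simpl; ring.
  apply: Rle_trans (Rle_Rpower phi (-1) 0 ltac:(lra) ltac:(lra)) _.
  rewrite Rpower_O; last lra. simpl; lra.
- rewrite (_ : INR j.+2 - 2 = INR j); last by rewrite !S_INR; ring.
  rewrite Rpower_pow; last lra. exact: fib_lo.
Qed.

Definition cS (k : nat) : R :=
  sumR (fun d => if condP k d then INR (k %/ d) - 1 else 0) k.+1.

Fixpoint Ex (n : nat) : R :=
  match n with 0 => 0 | m.+1 => Ex m + (INR m.+1 - 2) - cS m.+1 end.

Lemma LB n : Rpower phi (Ex n) <= INR (lcm_fib n).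
Proof.
have p1 := phi_gt1.
elim: n => [|n IH].
  rewrite /= Rpower_O; lra.
have A : INR (lcm_fib n) * INR (fib n.+1) <= INR (lcm_fib n.+1) * INR (prodP n.+1 n.+2)
  by rewrite -!INR_muln; apply: INR_leq; apply: L1.
have B := prodP_bound n.+2 (ltn0Sn n).
have Bp : 0 < INR (prodP n.+1 n.+2) by apply: lt_0_INR; apply/ltP; apply: prodP_gt0.
have F := fib_lo_R (ltn0Sn n).
have Rp1 : 0 < Rpower phi (Ex n) by apply: exp_pos.
have Rp2 : 0 < Rpower phi (cS n.+1) by apply: exp_pos.
have Lp : 0 <= INR (lcm_fib n.+1) by apply: pos_INR.
have C : Rpower phi (Ex n) * Rpower phi (INR n.+1 - 2) <= INR (lcm_fib n) * INR (fib n.+1).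
  apply: Rmult_le_compat => //; [lra | left; apply: exp_pos].
have E : Rpower phi (Ex n.+1) * Rpower phi (cS n.+1) = Rpower phi (Ex n) * Rpower phi (INR n.+1 - 2).
  rewrite -!Rpower_plus /=; f_equal; ring.
have B' : INR (prodP n.+1 n.+2) <= Rpower phi (cS n.+1) by exact: B.
nra.
Qed.

Definition Cm (M : nat) : R := INR M * (INR M - 1) / 2.

Definition Rs (n : nat) : R :=
  sumR (fun d => if (1 < d)%N && inS d then Cm (n %/ d) else 0) n.+1.

Lemma Rs_step n : Rs n.+1 = Rs n + cS n.+1.
Proof.
rewrite /Rs /cS.
set f1 := fun d => if (1 < d)%N && inS d then Cm (n.+1 %/ d) else 0.
set f0 := fun d => if (1 < d)%N && inS d then Cm (n %/ d) else 0.
set g := fun d => if condP n.+1 d then INR (n.+1 %/ d) - 1 else 0.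
have -> : sumR f1 n.+2 = sumR f1 n.+1 + f1 n.+1 by [].
have -> : sumR g n.+2 = sumR g n.+1 + g n.+1 by [].
rewrite (sumR_ext (g := fun d => f0 d + g d)); last first.
  move=> d Hd. rewrite /f1 /f0 /g /condP.
  case E: ((1 < d)%N && inS d) => /=; last lra.
  have H1 : (1 < d)%N by move: E => /andP [].
  rewrite divnS; last lia.
  case: (d %| n.+1).
  - rewrite /Cm add1n S_INR; field.
  - rewrite add0n; lra.
rewrite sumR_add.
have -> : f1 n.+1 = 0.
  by rewrite /f1 divnn /=; case: ifP => _ //; rewrite /Cm /=; field.
have -> : g n.+1 = 0.
  by rewrite /g; case: ifP => _ //; rewrite divnn /=; field.
lra.
Qed.

Lemma Ex_formula n : Ex n = INR n * (INR n + 1) / 2 - 2 * INR n - Rs n.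
Proof.
elim: n => [|n IH].
  rewrite /Rs /= /Cm /=. field.
change (Ex n.+1) with (Ex n + (INR n.+1 - 2) - cS n.+1).
rewrite IH Rs_step S_INR. field.
Qed.

Definition w (d : nat) : R := if (1 < d)%N && inS d then 1 / (INR d * INR d) else 0.
Definition sig0 : R := 1/4 + 1/9 + 1/25 + 1/49 + 1/27.

Lemma w_ge0 d : 0 <= w d.
Proof.
rewrite /w; case: ifP => [/andP [H _]|_]; last lra.
have : 0 < INR d by apply: lt_0_INR; apply/ltP; lia.
move=> h; apply: Rlt_le; apply: Rdiv_lt_0_compat; nra.
Qed.

Lemma pair_ineq x : 12 <= x ->
  1 / ((x - 1) * (x - 1)) + 1 / ((x + 1) * (x + 1)) <= 2 / ((x - 3) * (x + 3)).
Proof.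
move=> Hx.
have E : 2 / ((x - 3) * (x + 3)) - (1 / ((x - 1) * (x - 1)) + 1 / ((x + 1) * (x + 1)))
  = 2 * (6 * x * x + 10) / ((x - 3) * (x + 3) * ((x - 1) * (x - 1)) * ((x + 1) * (x + 1))).
  field; repeat split; lra.
have : 0 < 2 * (6 * x * x + 10) / ((x - 3) * (x + 3) * ((x - 1) * (x - 1)) * ((x + 1) * (x + 1))).
  apply: Rdiv_lt_0_compat; first nra.
  repeat apply: Rmult_lt_0_compat; lra.
lra.
Qed.

Lemma INR_lin a b i : INR (a * i + b)%N = INR a * INR i + INR b.
Proof. by rewrite INR_addn INR_muln. Qed.

Lemma w_out d : ~~ inS d -> w d = 0.
Proof. by rewrite /w => /negbTE ->; rewrite andbF. Qed.

Lemma w_in d : (1 < d)%N -> inS d -> w d = 1 / (INR d * INR d).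
Proof. by rewrite /w => -> ->. Qed.

Lemma wsum_block i : sumR w (6 * i + 11) <= sig0 - (1/3) / (6 * INR i + 9).
Proof.
elim: i => [|i IH].
  rewrite /sig0 /w /=. lra.
have -> : (6 * i.+1 + 11 = 6 * i + 17)%N by lia.
have -> : sumR w (6 * i + 17) = sumR w (6 * i + 11) + w (6 * i + 11) + w (6 * i + 12)
   + w (6 * i + 13) + w (6 * i + 14) + w (6 * i + 15) + w (6 * i + 16).
  have -> : (6 * i + 17 = (6 * i + 11).+1.+1.+1.+1.+1.+1)%N by lia.
  rewrite /=. do 5 f_equal; f_equal; lia.
rewrite (w_out (d := 6 * i + 12)); last by rewrite /inS; lia.
rewrite (w_out (d := 6 * i + 14)); last by rewrite /inS; lia.
rewrite (w_out (d := 6 * i + 15)); last by rewrite /inS; lia.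
rewrite (w_out (d := 6 * i + 16)); last by rewrite /inS; lia.
rewrite (w_in (d := 6 * i + 11)); [| lia | by rewrite /inS; lia].
rewrite (w_in (d := 6 * i + 13)); [| lia | by rewrite /inS; lia].
have E1 : INR (6 * i + 11) = (6 * INR i + 12) - 1.
  rewrite INR_lin; simpl; ring.
have E2 : INR (6 * i + 13) = (6 * INR i + 12) + 1.
  rewrite INR_lin; simpl; ring.
rewrite E1 E2 S_INR.
have Hi := pos_INR i.
have P := pair_ineq (x := 6 * INR i + 12) ltac:(lra).
have E3 : 2 / ((6 * INR i + 12 - 3) * (6 * INR i + 12 + 3)) =
          1 / 3 / (6 * INR i + 9) - 1 / 3 / (6 * (INR i + 1) + 9).
  field; lra.
lra.
Qed.

Lemma wsum_bound N : sumR w N <= sig0.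
Proof.
apply: Rle_trans (sumR_mono w_ge0 (_ : (N <= 6 * N + 11)%N)) _; first lia.
apply: Rle_trans (wsum_block N) _.
have := pos_INR N. move=> h.
have : 0 < 1 / 3 / (6 * INR N + 9) by apply: Rdiv_lt_0_compat; lra.
lra.
Qed.

Definition v (d : nat) : R := if (d == 2)%N || (d == 3)%N then 1 / INR d else 0.

Lemma sumR_v D : (4 <= D)%N -> sumR v D = 1/2 + 1/3.
Proof.
elim: D => [//|D IH] HD.
case: (D =P 3%N) => H.
- rewrite H /v /=. field.
- rewrite /= IH; last lia.
  rewrite /v; have -> : (D == 2)%N = false by lia.
  have -> : (D == 3)%N = false by lia. simpl; lra.
Qed.

Lemma le_div a b c : 0 < b -> a * b <= c -> a <= c / b.
Proof.
move=> hb h.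
have hi : 0 < / b by apply: Rinv_0_lt_compat.
have := Rmult_le_compat_r (/ b) _ _ (Rlt_le _ _ hi) h.
have -> : a * b * / b = a by field; lra.
done.
Qed.

Lemma term_bound n d : (d < n.+1)%N ->
  (if (1 < d)%N && inS d then Cm (n %/ d) else 0) <=
  INR n * INR n / 2 * w d - INR n / 2 * v d.
Proof.
move=> Hd.
rewrite /w /v.
case C: ((1 < d)%N && inS d).
- have H1 : (1 < d)%N by move: C => /andP [].
  have dp : 0 < INR d by apply: lt_0_INR; apply/ltP; lia.
  have dn : INR d <= INR n by apply: INR_leq; lia.
  have Mle : INR (n %/ d) * INR d <= INR n
    by rewrite -INR_muln; apply: INR_leq; apply: leq_trunc_div.
  set M := INR (n %/ d).
  have M0 : 0 <= M by apply: pos_INR.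
  set x := INR n / INR d.
  have Mx : M <= x by rewrite /x; apply: le_div.
  have x1 : 1 <= x by rewrite /x; apply: le_div => //; lra.
  have Cb : Cm (n %/ d) <= (x * x - x) / 2.
    rewrite /Cm -/M. nra.
  have Ex : (x * x - x) / 2 = INR n * INR n / 2 * (1 / (INR d * INR d)) - INR n / 2 * (1 / INR d).
    rewrite /x; field; lra.
  case: ifP => _; first lra.
  have : 0 <= x by lra.
  have Ex2 : x * x / 2 = INR n * INR n / 2 * (1 / (INR d * INR d)) by rewrite /x; field; lra.
  nra.
- have -> : (d == 2)%N || (d == 3)%N = false.
    apply/negbTE/negP => /orP [] /eqP E; by move: C; rewrite E.
  lra.
Qed.

Lemma Rs_bound n : (3 <= n)%N -> Rs n <= INR n * INR n / 2 * sig0 - INR n / 2 * (5/6).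
Proof.
move=> Hn.
rewrite /Rs.
apply: Rle_trans (sumR_le (term_bound (n := n))) _.
rewrite (sumR_ext (g := fun d => INR n * INR n / 2 * w d + (- (INR n / 2)) * v d)); last first.
  move=> d _; ring.
rewrite sumR_add !sumR_scal sumR_v; last lia.
have := wsum_bound n.+1.
have : 0 <= INR n * INR n / 2 by have := pos_INR n; nra.
nra.
Qed.

Lemma Ex_big n : (51 <= n)%N -> (INR n ^ 2 - 9) / 4 <= Ex n.
Proof.
move=> Hn.
rewrite Ex_formula.
have := Rs_bound (n := n) ltac:(lia).
have : 51 <= INR n.
  have -> : 51 = INR 51 by simpl; ring.
  by apply: INR_leq.
rewrite /sig0 /=. nra.
Qed.


Lemma pow4_le a b : 0 <= a -> 0 <= b -> a ^ 4 <= b ^ 4 -> a <= b.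
Proof.
move=> ha hb h.
case: (Rle_lt_dec a b) => // hab.
have h1 : b * b < a * a by nra.
have h2 : b * b * (b * b) < a * a * (a * a) by nra.
simpl in h. lra.
Qed.

Lemma lower_final n : (1 <= n)%N ->
  Rpower phi ((INR n) ^ 2 / 4 - 9 / 4) <= INR (lcm_fib n).
Proof.
move=> Hn.
have p1 := phi_gt1.
have Lp : 1 <= INR (lcm_fib n).
  have -> : 1 = INR 1 by [].
  apply: INR_leq; exact: lcm_fib_gt0.
have Ex4 : INR n ^ 2 / 4 - 9 / 4 = (INR n ^ 2 - 9) / 4 by field.
rewrite Ex4.
case: (leqP 51 n) => H51.
  apply: Rle_trans (LB n).
  apply: Rle_Rpower; first lra. exact: Ex_big.
case: (leqP n 2) => H2.
  have : INR n <= 2.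
    have -> : 2 = INR 2 by simpl; ring.
    exact: INR_leq.
  have := pos_INR n. move=> h0 h2.
  apply: Rle_trans (Rle_Rpower phi _ 0 ltac:(lra) _) _.
  - rewrite /=; nra.
  - rewrite Rpower_O; lra.
have Hs : Peano.le (fib (Nat.sub (Nat.mul n n) 7)) (lcm_fib n * lcm_fib n * lcm_fib n * lcm_fib n)%coq_nat.
  apply: SmallCheck.small_check; split; apply/leP; lia.
have Hs' : INR (fib (Nat.sub (Nat.mul n n) 7)) <= INR (lcm_fib n) ^ 4.
  have := le_INR _ _ Hs. rewrite !mult_INR /=. lra.
have Ek : ((n * n - 9).+2 = Nat.sub (Nat.mul n n) 7)%N by lia.
have F := fib_lo (n * n - 9). rewrite Ek in F.
set y := Rpower phi ((INR n ^ 2 - 9) / 4).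
have yp : 0 < y by apply: exp_pos.
apply: pow4_le; [lra | lra |].
have -> : y ^ 4 = phi ^ (n * n - 9).
  rewrite -(Rpower_pow 4%N y yp) /y Rpower_mult.
  have -> : (INR n ^ 2 - 9) / 4 * INR 4 = INR (n * n - 9).
    have En : (n * n = (n * n - 9) + 9)%N by lia.
    have := f_equal INR En. rewrite INR_addn INR_muln => E.
    have E4 : INR 4%N = 4 by simpl; ring.
    have E9 : INR 9%N = 9 by simpl; ring.
    rewrite E9 in E. rewrite E4.
    have -> : INR n ^ 2 = INR n * INR n by ring.
    lra.
  rewrite Rpower_pow //; lra.
lra.
Qed.

Theorem mainTheorem7 (n : nat) (hn : Peano.le 1 n) :
  Rpower phi ((INR n) ^ 2 / 4 - 9 / 4) <= INR (lcm_fib n) /\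
  INR (lcm_fib n) <= Rpower phi ((INR n) ^ 2 / 3 + 4 * INR n / 3).
Proof.
split; [apply: lower_final; apply/leP; exact: hn | exact: upper_final].
Qed.
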